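(* Let $m\ge3$ and $2\le t\le m-1$. The hypergraph PIN model on the complete $t$-uniform hypergraph $K_{m,t}$ is strict Type $\mathcal S$.
   Context: Let $\mathcal M=\{1,\dots,m\}$. A hypergraph PIN model on $\mathcal H=(\mathcal M,\mathcal E)$, with $\mathcal E$ a finite multiset of subsets of $\mathcal M$, is defined as follows. Let $\mathcal E^{(n)}$ contain $n$ copies of each element of $\mathcal E$. Independent Bernoulli(1/2) variables $\xi_e$ are attached to the $e\in\mathcal E^{(n)}$, and $X^n_i=(\xi_e:e\in\mathcal E^{(n)},\ i\in e)$; the single-letter source $X_{\mathcal M}$ is the case $n=1$. $K_{m,t}=(\mathcal M,\mathcal E)$ is the hypergraph in which $\mathcal E$ contains exactly one copy of every $t$-element subset of $\mathcal M$. $\Delta(\mathcal P)=\frac1{|\mathcal P|-1}[\sum_{A\in\mathcal P}H(X_A)-H(X_{\mathcal M})]$ for partitions of $\mathcal M$ with at least 2 cells, where $X_A=(X_i:i\in A)$. The source is strict Type $\mathcal S$ if the singleton partition $\{\{1\},\dots,\{m\}\}$ is the unique minimizer of $\Delta$. *)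

(* Defs.v *)
From mathcomp Require Import all_boot.
From Stdlib Require Import Reals.

Set Implicit Arguments.
Unset Strict Implicit.
Unset Printing Implicit Defensive.

Definition log2 (x : R) : R := (ln x / ln 2)%R.

(* Shannon entropy (in bits) of the random variable f(w), where w is
   uniformly distributed on the finite set Om:
   H = sum_y - p(y) log2 p(y),  p(y) = #{w | f w = y} / #Om,
   with the convention 0 log 0 = 0. *)
Definition entropy (Om Y : finType) (f : Om -> Y) : R :=
  \big[Rplus/0%R]_(y : Y)
     (if #|[set w | f w == y]| == 0%N then 0%R
      else let p := (INR #|[set w | f w == y]| / INR #|Om|)%R in
           (- (p * log2 p))%R).

(* A hypergraph on M = {0,..,m-1} whose edge multiset is given as an
   indexed family: Ed is the (finite) index type of the edge copies and
   edge e is the vertex set of edge copy e.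
   Single-letter PIN source (n = 1): independent uniform bits xi_e,
   i.e. xi : {ffun Ed -> bool} uniformly distributed.
   X_i = (xi_e : i \in e); it is encoded (injectively) as the function
   e |-> (i \in e) && xi_e (coordinates of non-incident edges are padded
   by false).  X_A = (X_i : i \in A), encoded as i |-> X_i for i in A and
   a constant padding otherwise. *)
Definition PIN_Xi (m : nat) (Ed : finType) (edge : Ed -> {set 'I_m})
    (i : 'I_m) (xi : {ffun Ed -> bool}) : {ffun Ed -> bool} :=
  [ffun e => (i \in edge e) && xi e].

Definition PIN_XA (m : nat) (Ed : finType) (edge : Ed -> {set 'I_m})
    (A : {set 'I_m}) (xi : {ffun Ed -> bool}) : {ffun 'I_m -> {ffun Ed -> bool}} :=
  [ffun i => if i \in A then PIN_Xi edge i xi else [ffun=> false]].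

Definition PIN_H (m : nat) (Ed : finType) (edge : Ed -> {set 'I_m})
    (A : {set 'I_m}) : R :=
  entropy (PIN_XA edge A).

Definition PIN_Delta (m : nat) (Ed : finType) (edge : Ed -> {set 'I_m})
    (P : {set {set 'I_m}}) : R :=
  (((\big[Rplus/0%R]_(A in P) PIN_H edge A) - PIN_H edge [set: 'I_m])
     / INR (#|P| - 1))%R.

Definition admissible_partition (m : nat) (P : {set {set 'I_m}}) : Prop :=
  partition P [set: 'I_m] /\ (1 < #|P|)%N.

Definition singleton_partition (m : nat) : {set {set 'I_m}} :=
  [set [set i] | i : 'I_m].

Definition strict_typeS (m : nat) (Ed : finType) (edge : Ed -> {set 'I_m}) : Prop :=
  admissible_partition (singleton_partition m) /\
  forall P : {set {set 'I_m}}, admissible_partition P ->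
    P <> singleton_partition m ->
    (PIN_Delta edge (singleton_partition m) < PIN_Delta edge P)%R.

Definition Kmt_edges (m t : nat) : finType := {e : {set 'I_m} | #|e| == t}.
Definition Kmt_edge (m t : nat) (e : Kmt_edges m t) : {set 'I_m} := val e.

(* Main.v *)
Require Import Defs.
From mathcomp Require Import all_boot zify.
From Stdlib Require Import Reals Lra.
Set Implicit Arguments.
Unset Strict Implicit.
Unset Printing Implicit Defensive.

Lemma INR_sum (I : finType) (P : pred I) (F : I -> nat) :
  INR (\sum_(i | P i) F i)%N = \big[Rplus/0%R]_(i | P i) INR (F i).
Proof. by apply: (big_morph INR plus_INR). Qed.

Lemma Rsum_mull (I : finType) (P : pred I) (F : I -> R) c :
  \big[Rplus/0%R]_(i | P i) (F i * c)%R = (\big[Rplus/0%R]_(i | P i) F i * c)%R.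
Proof.
apply: (big_rec2 (fun x y => x = (y * c)%R)); first by rewrite Rmult_0_l.
by move=> i y1 y2 _ ->; rewrite Rmult_plus_distr_r.
Qed.

Lemma sum_fibers (Om Y : finType) (f : Om -> Y) :
  (\sum_(y : Y) #|[set w | f w == y]|)%N = #|Om|.
Proof.
rewrite -sum1_card (partition_big f predT) //=.
apply: eq_bigr => y _; rewrite -sum1_card; apply: eq_bigl => w.
by rewrite inE.
Qed.

Lemma entropy_uniform (Om Y : finType) (f : Om -> Y) (a : nat) :
  (0 < #|Om|)%N ->
  (forall y, #|[set w | f w == y]| != 0%N ->
     (#|[set w | f w == y]| * expn 2 a)%N = #|Om|) ->
  entropy f = INR a.
Proof.
move=> Om0 Hf; rewrite /entropy.
have HO : (0 < INR #|Om|)%R by apply: lt_0_INR; apply/ltP.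
rewrite (eq_bigr (fun y => INR #|[set w | f w == y]| * (INR a / INR #|Om|))%R).
  rewrite Rsum_mull -INR_sum sum_fibers; field; lra.
move=> y _; case: eqP => [-> | /eqP Hy]; first by rewrite /= Rmult_0_l.
have E := Hf y Hy.
set p := (INR _ / INR _)%R.
have Hp : p = (/ (2 ^ a))%R.
  rewrite /p -E mult_INR.
  have -> : INR (expn 2 a) = (2 ^ a)%R.
    have -> : expn 2 a = Nat.pow 2 a by clear; elim: a => //= n IH; rewrite expnS IH.
    by rewrite pow_INR.
  have H1 : (0 < INR #|[set w | f w == y]|)%R by apply: lt_0_INR; apply/ltP; rewrite lt0n.
  have H2 : (0 < 2 ^ a)%R by apply: pow_lt; lra.
  field; lra.
have Hl : log2 p = (- INR a)%R.
  rewrite Hp /log2 ln_Rinv; last by apply: pow_lt; lra.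
  rewrite ln_pow; last lra.
  have : (0 < ln 2)%R by have := ln_lt_2; lra.
  move=> ?; field; lra.
rewrite Hl /p; field; lra.
Qed.

Lemma meetsP (T : finType) (B A : {set T}) :
  reflect (exists i, (i \in B) && (i \in A)) (~~ [disjoint B & A]).
Proof.
rewrite -setI_eq0; apply: (iffP (set0Pn _)) => [[i /setIP [? ?]]|[i /andP[? ?]]].
  by exists i; apply/andP.
by exists i; apply/setIP.
Qed.

Lemma PIN_XA_eq (m : nat) (Ed : finType) (edge : Ed -> {set 'I_m}) A xi xi0 :
  (PIN_XA edge A xi == PIN_XA edge A xi0) =
  [forall e, ~~ [disjoint edge e & A] ==> (xi e == xi0 e)].
Proof.
apply/eqP/forallP => [H e | H].
  apply/implyP => /meetsP [i /andP [ie iA]].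
  have := congr1 (fun F : {ffun 'I_m -> {ffun Ed -> bool}} => F i e) H.
  by rewrite /PIN_XA !ffunE iA !ffunE ie /= => ->.
apply/ffunP => i; rewrite !ffunE; case: ifP => // iA.
apply/ffunP => e; rewrite !ffunE; case ie: (i \in edge e) => //=.
apply/eqP; move/implyP: (H e); apply; apply/meetsP; exists i; by rewrite ie iA.
Qed.

Lemma PIN_H_count (m : nat) (Ed : finType) (edge : Ed -> {set 'I_m}) A :
  PIN_H edge A = INR #|[set e | ~~ [disjoint edge e & A]]|.
Proof.
set D := [set e | [disjoint edge e & A]].
have -> : [set e | ~~ [disjoint edge e & A]] = ~: D by apply/setP => e; rewrite !inE.
apply: entropy_uniform.
  rewrite card_ffun expn_gt0 card_bool. done.
move=> y; rewrite cards_eq0 => /set0Pn [xi0]; rewrite inE => /eqP <-.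
pose xorf (xi : {ffun Ed -> bool}) := [ffun e => xi e (+) xi0 e].
have xinj : injective xorf.
  apply: (can_inj (g := xorf)) => xi; apply/ffunP => e; rewrite !ffunE.
  by rewrite -addbA addbb addbF.
have -> : [set w | PIN_XA edge A w == PIN_XA edge A xi0] =
          xorf @^-1: [set g | g \in pffun_on false D [set: bool]].
  apply/setP => xi; rewrite !inE PIN_XA_eq.
  apply/forallP/pffun_onP => [H | [H _] e].
    split; last by move=> b _; rewrite inE.
    apply/subsetP => e; rewrite inE ffunE inE => ne.
    apply: contraR ne => dis; move/implyP: (H e) => /(_ dis) /eqP ->.
    by rewrite addbb.
  apply/implyP => nd; apply/eqP.
  have : e \notin D by rewrite inE.
  move/subsetP: H => H eD.
  apply/eqP; apply: contraR eD => ne; apply: H; rewrite inE ffunE.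
  by case: (xi e) (xi0 e) ne => [] [].
rewrite card_preimset // cardsE card_pffun_on cardsT card_bool -expnD.
by rewrite cardsC card_ffun card_bool.
Qed.

Lemma bin_strict y z s : (y < z)%N -> (0 < s)%N -> (s <= z)%N -> ('C(y, s) < 'C(z, s))%N.
Proof.
case: z => // w; case: s => // r yw _ rw.
rewrite binS.
have h1 : ('C(y, r.+1) <= 'C(w, r.+1))%N by apply: leq_bin2l.
have h2 : (0 < 'C(w, r))%N by rewrite bin_gt0.
lia.
Qed.

Lemma key_le n x t : (2 <= t <= n)%N -> (x <= n)%N ->
  (n * 'C(x, t) <= x * 'C(n, t))%N.
Proof.
case: t => // s /andP [s1 sn] xn.
have ex : (s.+1 * 'C(x, s.+1) = x * 'C(x.-1, s))%N by rewrite mul_bin_diag.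
have en : (s.+1 * 'C(n, s.+1) = n * 'C(n.-1, s))%N by rewrite mul_bin_diag.
have cmp : ('C(x.-1, s) <= 'C(n.-1, s))%N by apply: leq_bin2l; lia.
rewrite -(leq_pmul2l (ltn0Sn s)) (mulnCA s.+1 n) ex (mulnCA s.+1 x) en (mulnCA n x).
by rewrite leq_mul2l leq_mul2l cmp !orbT.
Qed.

Lemma key_lt n x t : (2 <= t <= n)%N -> (0 < x < n)%N ->
  (n * 'C(x, t) < x * 'C(n, t))%N.
Proof.
case: t => // s /andP [s1 sn] /andP [x0 xn].
have ex : (s.+1 * 'C(x, s.+1) = x * 'C(x.-1, s))%N by rewrite mul_bin_diag.
have en : (s.+1 * 'C(n, s.+1) = n * 'C(n.-1, s))%N by rewrite mul_bin_diag.
have cmp : ('C(x.-1, s) < 'C(n.-1, s))%N by apply: bin_strict; lia.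
rewrite -(ltn_pmul2l (ltn0Sn s)) (mulnCA s.+1 n) ex (mulnCA s.+1 x) en (mulnCA n x).
by rewrite ltn_pmul2l ?ltn_pmul2l //; lia.
Qed.

Lemma singleton_partitionP m : (0 < m)%N -> partition (singleton_partition m) [set: 'I_m].
Proof.
move=> m0; apply/and3P; split.
- rewrite cover_imset; apply/eqP/setP => i; rewrite inE; apply/bigcupP.
  by exists i => //; rewrite inE.
- apply/trivIsetP => A B /imsetP [i _ ->] /imsetP [j _ ->] ne.
  rewrite disjoints1 inE; apply: contra ne => /eqP ->; by [].
- apply/imsetP => [[i _ /esym /eqP]]; rewrite -cards_eq0 cards1 //.
Qed.

Lemma card_singleton_partition m : #|singleton_partition m| = m.
Proof. by rewrite card_imset ?card_ord //; apply: set1_inj. Qed.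

Lemma big_cell m (P : {set {set 'I_m}}) :
  partition P [set: 'I_m] -> P != singleton_partition m ->
  exists2 A, A \in P & (2 <= #|A|)%N.
Proof.
move=> /and3P [/eqP cov triv n0] neP.
apply/exists_inP; apply: contraR neP; rewrite negb_exists_in => /forall_inP H.
have H1 : forall A, A \in P -> exists x, A = [set x].
  move=> A AP; apply/cards1P; have := H A AP; rewrite -leqNgt.
  have : A != set0 by apply: contraNneq n0 => <-.
  rewrite -card_gt0; lia.
apply/eqP/setP => A; apply/idP/idP => [AP | /imsetP [i _ ->]].
  by have [x ->] := H1 A AP; apply/imsetP; exists x.
have : i \in cover P by rewrite cov inE.
move=> /bigcupP [B BP iB]; have [x Bx] := H1 B BP.
by move: iB; rewrite Bx inE => /eqP ->; rewrite -Bx.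
Qed.

Lemma cell_small m (P : {set {set 'I_m}}) A :
  partition P [set: 'I_m] -> (1 < #|P|)%N -> A \in P -> (#|A| < m)%N.
Proof.
move=> /and3P [_ /trivIsetP triv n0] /card_gt1P [X [Y [XP YP XY]]] AP.
have [B BP BA] : exists2 B, B \in P & B != A.
  case: (eqVneq X A) => [eXA|]; last by exists X.
  by exists Y => //; rewrite -eXA eq_sym.
have dis := triv _ _ BP AP BA.
have : B != set0 by apply: contraNneq n0 => <-.
move/set0Pn => [i iB].
have iA : i \notin A.
  apply: contraL dis => iA; rewrite -setI_eq0; apply/set0Pn; exists i; exact/setIP.
have := cardsC A; rewrite card_ord.
have : (0 < #|~: A|)%N by rewrite card_gt0; apply/set0Pn; exists i; rewrite inE.
lia.
Qed.

Lemma comb_main m t (P : {set {set 'I_m}}) : (3 <= m)%N -> (2 <= t <= m - 1)%N ->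
  partition P [set: 'I_m] -> (1 < #|P|)%N -> P != singleton_partition m ->
  ((m - 1) * (\sum_(A in P) 'C(m - #|A|, t)) < (#|P| - 1) * (m * 'C(m - 1, t)))%N.
Proof.
move=> m3 ht Ppart P1 neP.
have [A0 A0P A02] := big_cell Ppart neP.
have A0m := cell_small Ppart P1 A0P.
have Hsz := card_partition Ppart; rewrite cardsT card_ord in Hsz.
have Hne : forall A, A \in P -> (0 < #|A|)%N.
  move: Ppart => /and3P [_ _ n0] A AP; rewrite card_gt0.
  by apply: contraNneq n0 => <-.
have Hsum : ((\sum_(A in P) (m - #|A|)) + \sum_(A in P) #|A| = #|P| * m)%N.
  rewrite -big_split /= -sum_nat_const; apply: eq_bigr => A AP.
  apply: subnK; have := max_card (mem A); rewrite card_ord //.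
rewrite big_distrr /=.
have Hlt : (\sum_(A in P) (m - 1) * 'C(m - #|A|, t) <
            \sum_(A in P) (m - #|A|) * 'C(m - 1, t))%N.
  rewrite (bigD1 A0) //= [X in (_ < X)%N](bigD1 A0) //=.
  have h1 : ((m - 1) * 'C(m - #|A0|, t) < (m - #|A0|) * 'C(m - 1, t))%N.
    apply: key_lt; lia.
  have h2 : (\sum_(A in P | A != A0) (m - 1) * 'C(m - #|A|, t) <=
             \sum_(A in P | A != A0) (m - #|A|) * 'C(m - 1, t))%N.
    apply: leq_sum => A /andP [AP _]; apply: key_le; first lia.
    have := Hne A AP; lia.
  rewrite -addSn; exact: leq_add h1 h2.
rewrite -big_distrl /= in Hlt.
have HD : (\sum_(A in P) (m - #|A|) = (#|P| - 1) * m)%N.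
  rewrite mulnBl mul1n; lia.
rewrite HD in Hlt; rewrite mulnA; exact: Hlt.
Qed.

Lemma Kmt_disj m t (A : {set 'I_m}) :
  #|[set e : Kmt_edges m t | [disjoint Kmt_edge e & A]]| = 'C(m - #|A|, t).
Proof.
rewrite -(card_imset _ val_inj).
have -> : val @: [set e : Kmt_edges m t | [disjoint Kmt_edge e & A]] =
          [set B : {set 'I_m} | B \subset ~: A & #|B| == t].
  apply/setP => B; rewrite inE; apply/imsetP/andP => [[e]|[sB tB]].
    rewrite inE /Kmt_edge => dis ->; split; [by rewrite -disjoints_subset | exact: (valP e)].
  by exists (exist _ B tB) => //; rewrite inE /Kmt_edge /= disjoints_subset.
rewrite cards_draws; congr 'C(_, _); have := cardsC A; rewrite card_ord; lia.
Qed.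

Lemma real_fin (hs hp sS sP N a b : R) : (0 < a)%R -> (0 < b)%R ->
  (hs + sS = (a + 1) * N)%R -> (hp + sP = (b + 1) * N)%R -> (a * sP < b * sS)%R ->
  ((hs - N) / a < (hp - N) / b)%R.
Proof.
move=> a0 b0 e1 e2 lt.
have -> : ((hs - N) / a = N - sS / a)%R by replace hs with ((a + 1) * N - sS)%R by lra; field; lra.
have -> : ((hp - N) / b = N - sP / b)%R by replace hp with ((b + 1) * N - sP)%R by lra; field; lra.
apply: Rplus_lt_compat_l; apply: Ropp_lt_contravar.
apply: (Rmult_lt_reg_r (a * b)); first nra.
have -> : (sP / b * (a * b) = a * sP)%R by field; lra.
have -> : (sS / a * (a * b) = b * sS)%R by field; lra.
exact: lt.
Qed.

Section Main.
Variables m t : nat.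
Hypothesis hm : (3 <= m)%N.
Hypothesis ht : (2 <= t <= m - 1)%N.

Let hK (A : {set 'I_m}) := #|[set e : Kmt_edges m t | ~~ [disjoint Kmt_edge e & A]]|.
Let N := #|Kmt_edges m t|.

Lemma hK_eq A : (hK A + 'C(m - #|A|, t) = N)%N.
Proof.
rewrite /hK -Kmt_disj /N -(cardsC [set e : Kmt_edges m t | [disjoint Kmt_edge e & A]]) addnC.
congr (_ + _)%N; apply: eq_card => e; by rewrite !inE.
Qed.

Lemma sum_hK (P : {set {set 'I_m}}) :
  ((\sum_(A in P) hK A) + \sum_(A in P) 'C(m - #|A|, t) = #|P| * N)%N.
Proof. by rewrite -big_split /= -sum_nat_const; apply: eq_bigr => A _; rewrite hK_eq. Qed.

Lemma Delta_eq (P : {set {set 'I_m}}) :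
  PIN_Delta (@Kmt_edge m t) P =
  ((INR (\sum_(A in P) hK A)%N - INR N) / INR (#|P| - 1))%R.
Proof.
rewrite /PIN_Delta INR_sum; congr ((_ - _) / _)%R.
  by apply: eq_bigr => A _; rewrite PIN_H_count.
rewrite PIN_H_count; congr INR.
have := hK_eq [set: 'I_m]; rewrite cardsT card_ord subnn bin0n.
have -> : (t == 0%N) = false by case: t ht.
by rewrite addn0.
Qed.

End Main.

Theorem corollary3 (m t : nat) (hm : (3 <= m)%N) (ht : (2 <= t <= m - 1)%N) :
  strict_typeS (@Kmt_edge m t).
Proof.
have m0 : (0 < m)%N by lia.
split.
  split; [exact: singleton_partitionP | by rewrite card_singleton_partition; lia].
move=> P [Ppart P1] neP.
have cm := comb_main hm ht Ppart P1 (introN eqP neP).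
have hS : (\sum_(A in singleton_partition m) 'C(m - #|A|, t) = m * 'C(m - 1, t))%N.
  rewrite -(card_singleton_partition m) -sum_nat_const card_singleton_partition.
  by apply: eq_bigr => A /imsetP [i _ ->]; rewrite cards1.
rewrite !Delta_eq // card_singleton_partition.
apply: (real_fin (sS := INR (\sum_(A in singleton_partition m) 'C(m - #|A|, t))%N)
                 (sP := INR (\sum_(A in P) 'C(m - #|A|, t))%N)).
- by apply: lt_0_INR; apply/ltP; lia.
- by apply: lt_0_INR; apply/ltP; lia.
- rewrite -plus_INR plusE.
  rewrite sum_hK card_singleton_partition -S_INR -mult_INR.
  by rewrite multE; congr INR; congr (_ * _)%N; lia.
- rewrite -plus_INR plusE.
  rewrite sum_hK -S_INR -mult_INR.
  by rewrite multE; congr INR; congr (_ * _)%N; lia.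
- rewrite -!mult_INR; apply: lt_INR; apply/ltP; rewrite hS; exact: cm.
Qed.
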